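(* Let $W$ be a Wigner function on $\mathbb{R}^2$ with marginals $\rho_x(x)=\int W(x,p)\,dp$ and $\rho_p(p)=\int W(x,p)\,dx$ (probability densities). Let $W^+=\max\{W,0\}$, $W^-=-\min\{W,0\}$, and $\rho_x^\pm(x)=\int W^\pm(x,p)\,dp$, $\rho_p^\pm(p)=\int W^\pm(x,p)\,dx$. Assuming all entropies below are finite, $$h(\rho_x)\ge h(\rho_x^+)-h(\rho_x^-),\qquad h(\rho_p)\ge h(\rho_p^+)-h(\rho_p^-).$$
   Context: For a non-negative integrable (not necessarily normalized) function $f$ on $\mathbb{R}^k$, $h(f)=-\int f\ln f$ (with $0\ln0=0$). Note $\rho_x=\rho_x^+-\rho_x^-$ and $\rho_p=\rho_p^+-\rho_p^-$. *)

(* Defs.v *)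
From HB Require Import structures.
From mathcomp Require Import all_boot all_order all_algebra.
From mathcomp Require Import all_classical all_reals all_analysis.
Set Implicit Arguments. Unset Strict Implicit. Unset Printing Implicit Defensive.
Import Order.TTheory GRing.Theory Num.Theory.
Import numFieldNormedType.Exports.
Local Open Scope classical_set_scope.
Local Open Scope ring_scope.

Section Defs.
Variable R : realType.
Notation leb := (@lebesgue_measure R).

(* A wave function psi = u + i v on R, normalized in L^2. *)
Definition pure_state (u v : R -> R) : Prop :=
  measurable_fun [set: R] u /\ measurable_fun [set: R] v /\
  leb.-integrable [set: R] (fun x => ((u x) ^+ 2 + (v x) ^+ 2)%:E) /\
  (\int[leb]_x ((u x) ^+ 2 + (v x) ^+ 2)%:E = 1)%E.

(* Wigner function of a pure state psi = u + i v (hbar = 1):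
   W(x,p) = (1/pi) Int conj(psi(x+y)) psi(x-y) e^{2ipy} dy,
   written out as the real part (the imaginary part vanishes). *)
Definition wigner_pure (u v : R -> R) (x p : R) : R :=
  pi^-1 * Rintegral leb [set: R] (fun y =>
    (u (x + y) * u (x - y) + v (x + y) * v (x - y)) * cos (2 * p * y)
    - (u (x + y) * v (x - y) - v (x + y) * u (x - y)) * sin (2 * p * y)).

(* Wigner function of a (possibly mixed) state rho = sum_k lam_k |psi_k><psi_k|. *)
Definition is_wigner (W : R -> R -> R) : Prop :=
  exists (lam : nat -> R) (u v : nat -> R -> R),
    (forall k, 0 <= lam k) /\
    series lam @ \oo --> (1 : R) /\
    (forall k, pure_state (u k) (v k)) /\
    (forall x p, series (fun k => lam k * wigner_pure (u k) (v k) x p) @ \oo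
                   --> W x p).

Definition posp (W : R -> R -> R) x p : R := Num.max (W x p) 0.
Definition negp (W : R -> R -> R) x p : R := - Num.min (W x p) 0.

Definition marg_x (W : R -> R -> R) (x : R) : R := Rintegral leb [set: R] (W x).
Definition marg_p (W : R -> R -> R) (p : R) : R :=
  Rintegral leb [set: R] (fun x => W x p).

(* differential entropy h(f) = - Int f ln f (ln 0 = 0 in mathcomp, so 0 ln 0 = 0) *)
Definition entropy (f : R -> R) : \bar R :=
  (\int[leb]_x (- (f x * ln (f x)))%:E)%E.

Definition finite_entropy (f : R -> R) : Prop :=
  leb.-integrable [set: R] (fun x => (f x * ln (f x))%:E).

Definition prob_density (f : R -> R) : Prop :=
  (forall x, 0 <= f x) /\ leb.-integrable [set: R] (fun x => (f x)%:E) /\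
  (\int[leb]_x (f x)%:E = 1)%E.

End Defs.

(* Main.v *)
Require Import Defs.
From HB Require Import structures.
From mathcomp Require Import all_boot all_order all_algebra.
From mathcomp Require Import all_classical all_reals all_analysis.
Import Order.TTheory GRing.Theory Num.Theory.
Import numFieldNormedType.Exports.
Local Open Scope classical_set_scope.
Local Open Scope ring_scope.

Lemma tlnt_sup (R : realType) (a b : R) : 0 <= a -> 0 <= b ->
  a * ln a + b * ln b <= (a + b) * ln (a + b).
Proof.
rewrite le_eqVlt => /orP[/eqP<-|a0]; first by rewrite (ln0 (lexx 0)) mulr0 !add0r.
rewrite le_eqVlt => /orP[/eqP<-|b0]; first by rewrite (ln0 (lexx 0)) mulr0 !addr0.
have ab : 0 < a + b by rewrite addr_gt0.
rewrite mulrDl; apply: lerD; apply: ler_wpM2l; try exact: ltW.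
- by rewrite ler_ln ?posrE // lerDl ltW.
- by rewrite ler_ln ?posrE // lerDr ltW.
Qed.

Lemma ent_int (R : realType) (g : R -> R) : finite_entropy g ->
  (@lebesgue_measure R).-integrable [set: R] (fun x => (- (g x * ln (g x)))%:E).
Proof.
move=> /integrableN h; move: h; apply: eq_integrable => // x _ /=; by rewrite EFinN.
Qed.

Lemma ent_fin (R : realType) (g : R -> R) : finite_entropy g ->
  entropy g \is a fin_num.
Proof. move=> h; apply: integrable_fin_num => //; exact: ent_int. Qed.

Lemma gen_ineq (R : realType) (f fp fn : R -> R) :
  (forall x, f x = fp x - fn x) -> (forall x, 0 <= f x) -> (forall x, 0 <= fn x) ->
  finite_entropy f -> finite_entropy fp -> finite_entropy fn ->
  (entropy fp - entropy fn <= entropy f)%E.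
Proof.
move=> ff f0 fn0 If Ip In.
rewrite leeBlDr; last exact: ent_fin.
rewrite /entropy -integralD //; try exact: ent_int.
apply: le_integral => //; first exact: ent_int.
  by apply: integrableD => //; exact: ent_int.
move=> x _; rewrite -EFinD lee_fin.
have -> : fp x = f x + fn x by rewrite ff subrK.
rewrite -opprD lerN2; exact: tlnt_sup.
Qed.

Lemma int_pos (R : realType) (g : R -> R) :
  (@lebesgue_measure R).-integrable [set: R] (fun p => (g p)%:E) ->
  (@lebesgue_measure R).-integrable [set: R] (fun p => (Num.max (g p) 0)%:E).
Proof.
move=> /(integrable_funepos measurableT) h; move: h; apply: eq_integrable => // x _.
by rewrite funeposE EFin_max.
Qed.

Lemma int_neg (R : realType) (g : R -> R) :
  (@lebesgue_measure R).-integrable [set: R] (fun p => (g p)%:E) ->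
  (@lebesgue_measure R).-integrable [set: R] (fun p => (- Num.min (g p) 0)%:E).
Proof.
move=> /(integrable_funeneg measurableT) h; move: h; apply: eq_integrable => // x _.
by rewrite funenegE oppr_min oppr0 EFin_max EFinN.
Qed.

Lemma decomp (R : realType) (g : R -> R) :
  (@lebesgue_measure R).-integrable [set: R] (fun p => (g p)%:E) ->
  Rintegral (@lebesgue_measure R) [set: R] g =
  Rintegral (@lebesgue_measure R) [set: R] (fun p => Num.max (g p) 0) -
  Rintegral (@lebesgue_measure R) [set: R] (fun p => - Num.min (g p) 0).
Proof.
move=> h; rewrite -RintegralB //; [| exact: int_pos | exact: int_neg].
congr Rintegral; apply/funext => p.
by rewrite opprK; case: (leP (g p) 0) => H;
  rewrite ?(max_r H) ?(min_l H) ?(max_l (ltW H)) ?(min_r (ltW H)) ?add0r ?addr0.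
Qed.

Theorem mainTheorem10 (R : realType) (W : R -> R -> R) :
  is_wigner W ->
  (forall x, (@lebesgue_measure R).-integrable [set: R] (fun p => (W x p)%:E)) ->
  (forall p, (@lebesgue_measure R).-integrable [set: R] (fun x => (W x p)%:E)) ->
  prob_density (marg_x W) -> prob_density (marg_p W) ->
  finite_entropy (marg_x W) -> finite_entropy (marg_x (posp W)) ->
  finite_entropy (marg_x (negp W)) ->
  finite_entropy (marg_p W) -> finite_entropy (marg_p (posp W)) ->
  finite_entropy (marg_p (negp W)) ->
  (entropy (marg_x (posp W)) - entropy (marg_x (negp W)) <= entropy (marg_x W))%E /\
  (entropy (marg_p (posp W)) - entropy (marg_p (negp W)) <= entropy (marg_p W))%E.
Proof.
move=> _ Ix Ip [fx0 _] [fp0 _] E1 E2 E3 E4 E5 E6; split.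
- apply: gen_ineq => //.
  + by move=> x; rewrite /marg_x (@decomp _ _ (Ix x)).
  + move=> x; apply: Rintegral_ge0 => p _.
    by rewrite /negp oppr_ge0 ge_min lexx orbT.
- apply: gen_ineq => //.
  + by move=> p; rewrite /marg_p (@decomp _ _ (Ip p)).
  + move=> p; apply: Rintegral_ge0 => x _.
    by rewrite /negp oppr_ge0 ge_min lexx orbT.
Qed.
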